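(* Let $J$ be a finite index set and for each $j\in J$ let $\Lambda_j\subset[0,2]$ be a finite multiset of numbers. Let $G$ and $G_j$ ($j\in J$) be finite simple graphs without isolated vertices such that: (a) $G_j\preccurlyeq_{t'_j} G\preccurlyeq_{t''_j} G_j$ for some $t'_j,t''_j\in\mathbb N_0$, and set $t_j:=t'_j+t''_j$; (b) $\Lambda_j$ has multiplicity $\mu_j$ in the spectrum of the standard Laplacian of $G_j$, with $\mu_j>t_j$; (c) the sets $\Lambda_j$, $j\in J$, are pairwise disjoint; (d) $|G|=\sum_{j\in J}(\mu_j-t_j)\,|\Lambda_j|$ (where $|\Lambda_j|$ counts elements with multiplicity). Then the spectrum of the standard Laplacian of $G$ (as a multiset) equals $\biguplus_{j\in J}\Lambda_j^{(\mu_j-t_j)}$, i.e. each element of $\Lambda_j$ occurring $s$ times in $\Lambda_j$ occurs exactly $s(\mu_j-t_j)$ times in the spectrum of $G$, and there are no other eigenvalues. The same statement holds for the signless standard Laplacians.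
   Context: All graphs are finite, simple, without isolated vertices; $|G|$ is the number of vertices. The standard Laplacian is $(\Delta_G f)(v)=f(v)-\frac{1}{\deg v}\sum_{u\in N_v}f(u)$ and the signless one $(\Delta_{G^+}f)(v)=f(v)+\frac{1}{\deg v}\sum_{u\in N_v}f(u)$ (equivalently the matrices $I\mp D^{-1/2}AD^{-1/2}$); their eigenvalues in ascending order with multiplicity are $\lambda_1(G)\le\dots\le\lambda_{|G|}(G)$, and spectra lie in $[0,2]$. Spectral preorder: $G\preccurlyeq_t G'$ ($t\in\mathbb N_0$) means $|G|\ge|G'|-t$ and $\lambda_k(G)\le\lambda_{k+t}(G')$ for all $1\le k\le|G'|-t$. A multiset $\Lambda$ has multiplicity $\mu$ in a spectrum $\sigma$ if each element of $\Lambda$ having multiplicity $s$ in $\Lambda$ has multiplicity at least $s\mu$ in $\sigma$; this is written $\Lambda^{(\mu)}\subset\sigma$, and $\Lambda^{(\mu)}$ denotes $\Lambda$ with all multiplicities multiplied by $\mu$; $\biguplus$ is the multiset union. *)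

(* Defs.v *)
From HB Require Import structures.
From mathcomp Require Import all_boot all_order all_algebra.
From mathcomp Require Import reals.
Set Implicit Arguments. Unset Strict Implicit. Unset Printing Implicit Defensive.
Import Order.TTheory GRing.Theory Num.Theory.
Local Open Scope ring_scope.

Definition simple_graph (n : nat) (e : rel 'I_n) : Prop :=
  [/\ symmetric e, irreflexive e & forall v : 'I_n, exists u, e v u].

Definition gdeg (n : nat) (e : rel 'I_n) (v : 'I_n) : nat := #|[set u | e v u]|.

(* Normalized Laplacian matrix  I - D^{-1/2} A D^{-1/2}  (signless = false)
   or signless one  I + D^{-1/2} A D^{-1/2}  (signless = true). *)
Definition nlap (R : realType) (signless : bool) (n : nat) (e : rel 'I_n)
  : 'M[R]_n :=
  \matrix_(i, j) ((i == j)%:R +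
     (if signless then 1 else -1) * (e i j)%:R
       / Num.sqrt ((gdeg e i)%:R * (gdeg e j)%:R)).

Definition is_spectrum (R : realType) (n : nat) (M : 'M[R]_n) (s : seq R) : Prop :=
  sorted <=%R s /\ char_poly M = \prod_(x <- s) ('X - x%:P).

(* Spectral preorder on ascending spectra: s ≼_t s'  iff
   |s| >= |s'| - t and lambda_k(s) <= lambda_{k+t}(s') for 1 <= k <= |s'| - t
   (here 0-indexed). *)
Definition spec_prec (R : realType) (t : nat) (s s' : seq R) : Prop :=
  (size s' - t <= size s)%N /\
  forall k : nat, (k < size s' - t)%N -> s`_k <= s'`_(k + t).

Definition has_mult (R : realType) (Lam : seq R) (mu : nat) (sigma : seq R) : Prop :=
  forall x, x \in Lam -> (count_mem x Lam * mu <= count_mem x sigma)%N.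

Definition mscale (R : realType) (Lam : seq R) (mu : nat) : seq R :=
  flatten (nseq mu Lam).

(* Main.v *)
Require Import Defs.
From HB Require Import structures.
From mathcomp Require Import all_boot all_order all_algebra.
From mathcomp Require Import reals.
From mathcomp Require Import zify.
Import Order.TTheory GRing.Theory Num.Theory.
Local Open Scope ring_scope.

Section Aux.
Variable R : realType.

Lemma prefix_lem (P : pred R) (s : seq R) :
  sorted <=%R s -> (forall y z, z <= y -> P y -> P z) ->
  forall i, (i < count P s)%N -> P s`_i.
Proof.
move=> so Pd; elim: s so => [|a s IH] //= so i.
have sos : sorted <=%R s by apply: (path_sorted so).
case Pa: (P a) => /=.
  case: i => [|i] //= Hi; apply: IH => //.
have Hall : all (fun y => (a <= y)%R) s.
  by apply: order_path_min => //; apply: le_trans.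
have -> : count P s = 0%N.
  apply/eqP; rewrite -leqn0 leqNgt -has_count; apply/hasPn => y ys.
  by apply/negP => Py; move: Pa; rewrite (Pd y a) //; apply: (allP Hall).
by [].
Qed.

Lemma count_lb (P : pred R) (s : seq R) m :
  (forall i, (i < m)%N -> P s`_i) -> (m <= size s)%N -> (m <= count P s)%N.
Proof.
elim: s m => [|a s IH] m /= H Hm; first by move: Hm; rewrite leqn0 => /eqP->.
case: m H Hm => [|m] H Hm //.
rewrite (H 0%N) //= add1n ltnS; apply: IH => // i Hi.
exact: (H i.+1).
Qed.

Lemma count_split (x : R) s :
  count (fun y => (y <= x)%R) s = (count (fun y => (y < x)%R) s + count_mem x s)%N.
Proof.
elim: s => //= a s ->; rewrite le_eqVlt; case: eqP => [->|_] /=.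
  by rewrite ltxx; lia.
by case: (a < x); lia.
Qed.

Lemma interlace (s1 s2 : seq R) t1 t2 x :
  sorted <=%R s1 -> sorted <=%R s2 ->
  spec_prec t1 s1 s2 -> spec_prec t2 s2 s1 ->
  (count_mem x s1 - (t1 + t2) <= count_mem x s2)%N.
Proof.
move=> so1 so2 [sz1 H1] [sz2 H2].
set q := count (fun y => (y <= x)%R) s1.
set pj := count (fun y => (y < x)%R) s1.
set QG := count (fun y => (y <= x)%R) s2.
set PG := count (fun y => (y < x)%R) s2.
have dle : forall y z : R, z <= y -> y <= x -> z <= x.
  by move=> y z; apply: le_trans.
have dlt : forall y z : R, z <= y -> y < x -> z < x.
  by move=> y z; apply: le_lt_trans.
have hq : (q <= size s1)%N by apply: count_size.
have hP : (PG <= size s2)%N by apply: count_size.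
have A : (q - t2 <= QG)%N.
  apply: count_lb; last by lia.
  move=> k Hk; apply: (le_trans (H2 k _)); first by lia.
  apply: (@prefix_lem (fun y => (y <= x)%R) s1 so1 dle); rewrite -/q; lia.
have B : (PG - t1 <= pj)%N.
  apply: count_lb; last by lia.
  move=> k Hk; apply: (le_lt_trans (H1 k _)); first by lia.
  apply: (@prefix_lem (fun y => (y < x)%R) s2 so2 dlt); rewrite -/PG; lia.
have E1 := count_split x s1; have E2 := count_split x s2.
rewrite -/q -/pj in E1; rewrite -/QG -/PG in E2.
lia.
Qed.

Lemma spec_size {n} {M : 'M[R]_n} {s} : is_spectrum M s -> size s = n.
Proof.
move=> [_ E]; have := size_char_poly M; rewrite E size_prod_XsubC.
by case.
Qed.

End Aux.

Theorem mainTheorem2 (R : realType) (signless : bool) (J : finType)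
  (Lam : J -> seq R)
  (n : nat) (e : rel 'I_n) (sG : seq R)
  (nj : J -> nat) (ej : forall j : J, rel 'I_(nj j)) (sj : J -> seq R)
  (t' t'' mu : J -> nat) :
  (forall j, all (fun x => (0 <= x) && (x <= 2)) (Lam j)) ->
  simple_graph e ->
  (forall j, simple_graph (ej j)) ->
  is_spectrum (nlap R signless e) sG ->
  (forall j, is_spectrum (nlap R signless (ej j)) (sj j)) ->
  (* (a) *)
  (forall j, spec_prec (t' j) (sj j) sG /\ spec_prec (t'' j) sG (sj j)) ->
  (* (b) *)
  (forall j, has_mult (Lam j) (mu j) (sj j) /\ (t' j + t'' j < mu j)%N) ->
  (* (c) *)
  (forall i j, i != j -> forall x, x \in Lam i -> x \notin Lam j) ->
  (* (d) *)
  n = (\sum_(j : J) (mu j - (t' j + t'' j)) * size (Lam j))%N ->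
  perm_eq sG
    (flatten [seq mscale (Lam j) (mu j - (t' j + t'' j)) | j <- enum J]).
Proof.
move=> _ _ _ sGs sjs Ha Hb Hc Hd.
set T := flatten _.
have cntT : forall x, count_mem x T =
    (\sum_(j : J) count_mem x (Lam j) * (mu j - (t' j + t'' j)))%N.
  move=> x; rewrite /T count_flatten -map_comp sumnE big_map -big_enum /=.
  apply: eq_bigr => j _ /=; rewrite /mscale count_flatten.
  by rewrite map_nseq sumn_nseq.
have sizeT : size T = n.
  rewrite Hd /T size_flatten /shape -map_comp sumnE big_map -big_enum /=.
  apply: eq_bigr => j _ /=; rewrite /mscale size_flatten /shape.
  by rewrite map_nseq sumn_nseq mulnC.
have le : forall x, (count_mem x T <= count_mem x sG)%N.
  move=> x; rewrite cntT.
  have [j0 xj0|none] := pickP (fun j => x \in Lam j); last first.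
    rewrite big1 // => j _; have := none j => /= /negbT /count_memPn ->.
    by rewrite mul0n.
  rewrite (bigD1 j0) //= big1 ?addn0; last first.
    move=> j Hne0; have Hne : j0 != j by rewrite eq_sym.
    by rewrite (count_memPn (Hc _ _ Hne x xj0)) mul0n.
  have [Hm Hlt] := Hb j0.
  have Hm0 := Hm x xj0.
  have [Ha1 Ha2] := Ha j0.
  have [so1 _] := sjs j0; have [so2 _] := sGs.
  have I := @interlace R _ _ _ _ x so1 so2 Ha1 Ha2.
  have c1 : (0 < count_mem x (Lam j0))%N by rewrite lt0n; apply/negP => /eqP/count_memPn/negP; apply.
  move: Hm0 I Hlt c1.
  set c := count_mem x (Lam j0); set m := mu j0; set t := (t' j0 + t'' j0)%N.
  move=> Hm0 I Hlt c1; rewrite mulnBr.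
  have ht : (t <= c * t)%N by rewrite leq_pmull.
  apply: (leq_trans (leq_sub2l _ ht)); apply: leq_trans I.
  exact: leq_sub2r.
have [s ss ps] := (@count_subseqP _ T sG).1 le.
have : size s = size sG by rewrite -(perm_size ps) sizeT (@spec_size R _ _ _ sGs).
move/eqP; rewrite (size_subseq_leqif ss).2 => /eqP Es; rewrite -Es.
by rewrite perm_sym.
Qed.
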